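(* Let $\omega$ be a quasi-free Hadamard state of the free massless scalar field on four-dimensional Minkowski spacetime, and let $x$ be a point of Minkowski spacetime. Then $\omega$ is $\mathbf{T}_{2n}(x)$-thermal for all integers $n\geq 1$ if and only if it is $\mathbf{T}_{2}(x)$-thermal. As a consequence, a $\mathbf{T}_2(x)$-thermal quasi-free state has a sharp local temperature at $x$: any probability measure $\rho_x$ on $(0,\infty)$ witnessing its $\mathbf{T}_4(x)$-thermality is a Dirac measure.
   Context: Consider the free massless scalar field $\phi$ on Minkowski spacetime (signature $(-,+,+,+)$, units $k_B=1$). For $k\geq 0$ let $:\!\phi^{k}\!:(x)$ denote the Wick powers, defined by point splitting/normal ordering with respect to the Hadamard parametrix (in Minkowski spacetime no curvature renormalization terms appear). A state $\omega$ is quasi-free if its odd $n$-point functions vanish and its $2n$-point functions are given by the sum over all pairings of products of two-point functions; in a quasi-free Hadamard state $\omega(:\!\phi^{2n}\!:(x))=(2n-1)!!\,\omega(:\!\phi^2\!:(x))^n$. For $\beta>0$ let $\omega_\beta$ denote the (unique, quasi-free, translation-invariant) global thermal equilibrium (KMS) state at inverse temperature $\beta$ in a fixed Lorentz frame; it satisfies $\omega_\beta(:\!\phi^{2n}\!:(0))=\frac{(2n-1)!!}{12^n\beta^{2n}}$. For an integer $n\geq0$ let $\mathbf{T}_{2n}=\{\mathbf{1},:\!\phi^2\!:,\dots,:\!\phi^{2n}\!:\}$. A state $\omega$ is called $\mathbf{T}_{2n}(x)$-thermal if there exists a probability measure $\rho_x$ on $(0,\infty)$ such that $\omega(:\!\phi^{2k}\!:(x))=\int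 d\rho_x(\beta)\,\omega_\beta(:\!\phi^{2k}\!:(0))$ for all $k=0,1,\dots,n$ (with the integrals finite). The state is said to have a sharp local temperature at $x$ if the measure $\rho_x$ is a Dirac measure. *)

(* Defs.v *)
From HB Require Import structures.
From mathcomp Require Import all_boot all_order all_algebra.
From mathcomp Require Import all_classical all_reals all_analysis.
Set Implicit Arguments. Unset Strict Implicit. Unset Printing Implicit Defensive.
Import Order.TTheory GRing.Theory Num.Theory.
Local Open Scope classical_set_scope.
Local Open Scope ring_scope.

(* odd double factorial: dfact n = (2n-1)!! = 1 * 3 * ... * (2n-1); dfact 0 = 1 *)
Definition dfact (n : nat) : nat := \prod_(i < n) (2 * i + 1)%N.

(* Wick-power data of a state at a fixed point x:
   wick k = omega(:phi^k:(x)).  A quasi-free Hadamard state satisfies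
   omega(:phi^{2n}:(x)) = (2n-1)!! omega(:phi^2:(x))^n (and omega(1) = 1). *)
Definition quasi_free_wick (R : realType) (wick : nat -> R) : Prop :=
  forall n : nat, wick (2 * n)%N = (dfact n)%:R * wick 2%N ^+ n.

Definition pos_reals (R : realType) : set R := `]0, +oo[%classic.

(* omega_beta(:phi^{2n}:(0)) = (2n-1)!! / (12^n beta^{2n}) *)
Definition thermal_val (R : realType) (n : nat) (beta : R) : R :=
  (dfact n)%:R / (12%:R ^+ n * beta ^+ (2 * n)).

(* rho (a probability measure on R concentrated on (0,oo)) witnesses
   T_{2n}(x)-thermality of the state with Wick data wick *)
Definition thermal_witness (R : realType) (wick : nat -> R) (n : nat)
    (rho : probability R R) : Prop :=
  rho (@pos_reals R) = 1%E /\
  forall k : nat, (k <= n)%N ->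
    rho.-integrable (@pos_reals R) (fun b => (thermal_val k b)%:E) /\
    (\int[rho]_(b in (@pos_reals R)) (thermal_val k b)%:E = (wick (2 * k)%N)%:E)%E.

Definition T_thermal (R : realType) (wick : nat -> R) (n : nat) : Prop :=
  exists rho : probability R R, thermal_witness wick n rho.

Definition is_dirac (R : realType) (rho : probability R R) : Prop :=
  exists beta : R, 0 < beta /\
    forall A : set R, measurable A -> rho A = \d_beta A.

(* Main.v *)
Require Import Defs.
From HB Require Import structures.
From mathcomp Require Import all_boot all_order all_algebra.
From mathcomp Require Import all_classical all_reals all_analysis.
From mathcomp Require Import measurable_realfun ring lra.
Import Order.TTheory GRing.Theory Num.Theory.
Import numFieldNormedType.Exports.
Section H.
Local Open Scope classical_set_scope.
Local Open Scope ring_scope.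
Variable R : realType.

Lemma mP : measurable (@pos_reals R).
Proof. exact: measurable_itv. Qed.

Lemma tv_meas k : measurable_fun (@pos_reals R) (@thermal_val R k).
Proof.
apply: open_continuous_measurable_fun; first exact: interval_open.
move=> x; rewrite inE /pos_reals /= in_itv /= andbT => x0.
rewrite /thermal_val.
have -> : (fun b : R => (dfact k)%:R / (12%:R ^+ k * b ^+ (2 * k))) =
   (cst (dfact k)%:R) \* (fun b => ((cst (12%:R ^+ k) \* (fun b : R => b ^+ (2 * k))) b)^-1).
  by apply: funext => b.
have hne : (cst (12%:R ^+ k) \* (fun b : R => b ^+ (2 * k))) x != 0.
  by rewrite /GRing.mul_fun /= mulf_neq0 // ?expf_neq0 // ?gt_eqF.
have hc (c : R) : (cst c : R -> R) @ x --> c by exact: cvg_cst.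
exact: (continuousM (hc _) (continuousV hne (continuousM (hc _) (@exprn_continuous R (2*k) x)))).
Qed.


Local Notation P := (@pos_reals R).

Lemma int0_null (rho : probability R R) (h : R -> R) :
  measurable_fun P h -> (forall b, P b -> 0 <= h b) ->
  (\int[rho]_(b in P) (h b)%:E = 0)%E ->
  exists N, [/\ measurable N, rho N = 0%E & forall b, P b -> ~ N b -> h b = 0].
Proof.
move=> mh h0 i0.
have mf : measurable_fun P (fun b => (h b)%:E) by exact/measurable_EFinP.
have : (\int[rho]_(b in P) `|(h b)%:E| = 0)%E.
  rewrite -i0; apply: eq_integral => b; rewrite inE => Pb.
  by rewrite gee0_abs // lee_fin; exact: h0.
move/(ae_eq_integral_abs rho mP mf) => [N [mN N0 sub]].
exists N; split => // b Pb Nb.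
apply: contra_notP Nb => hb; apply: sub => /(_ Pb) /eqP; rewrite eqe => /eqP.
exact: hb.
Qed.

Lemma pick_pt (rho : probability R R) N :
  rho P = 1%E -> measurable N -> rho N = 0%E -> exists b, P b /\ ~ N b.
Proof.
move=> P1 mN N0; apply: contrapT => H.
have sub : P `<=` N.
  move=> b Pb; apply: contrapT => Nb; apply: H; by exists b.
have h1 := le_measure rho (mem_set mP) (mem_set mN) sub.
have : (1 <= 0 :> \bar R)%E by rewrite -[X in (X <= _)%E]P1 -N0.
by rewrite lee_fin ler10.
Qed.

Lemma dfact1 : dfact 1 = 1%N. Proof. by rewrite /dfact big_ord1. Qed.
Lemma dfact2 : dfact 2 = 3%N. Proof. by rewrite /dfact big_ord_recr big_ord1. Qed.

Lemma tv1E (b : R) : thermal_val 1 b = (12%:R * b ^+ 2)^-1.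
Proof. by rewrite /thermal_val dfact1 mul1r expr1. Qed.

Lemma tv2E (b : R) : thermal_val 2 b = 3%:R * (thermal_val 1 b) ^+ 2.
Proof.
by rewrite tv1E /thermal_val dfact2 exprVn exprMn -exprM.
Qed.


Lemma Ppos (b : R) : P b -> 0 < b.
Proof. by rewrite /P /pos_reals /= in_itv /= andbT. Qed.

Lemma part2 (wick : nat -> R) (hqf : quasi_free_wick wick) (rho : probability R R) :
  thermal_witness wick 2 rho -> is_dirac rho.
Proof.
case=> P1 H.
have [i1 e1] := H 1%N isT.
have [i2 e2] := H 2%N isT.
set c := wick 2%N.
have e1' : (\int[rho]_(b in P) (thermal_val 1 b)%:E = c%:E)%E by rewrite e1.
have e2' : (\int[rho]_(b in P) (thermal_val 2 b)%:E = (3%:R * c ^+ 2)%:E)%E.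
  by rewrite e2 (hqf 2%N) dfact2.
pose g b := (thermal_val 1 b - c) ^+ 2.
have gE b : (g b)%:E = ((3%:R^-1)%R%:E * (thermal_val 2 b)%:E
    + (- (2%:R * c))%R%:E * (thermal_val 1 b)%:E + (EFin \o cst (c ^+ 2)%R) b)%E.
  rewrite /g tv2E /= -!EFinM -!EFinD; congr EFin.
  rewrite mulrA mulVf ?pnatr_eq0 // mul1r; ring.
have iZ2 : rho.-integrable P (fun b => ((3%:R^-1)%R%:E * (thermal_val 2 b)%:E)%E).
  by have := integrableZl mP (3%:R^-1) i2.
have iZ1 : rho.-integrable P (fun b => ((- (2%:R * c))%R%:E * (thermal_val 1 b)%:E)%E).
  by have := integrableZl mP (- (2%:R * c)) i1.
have iA := integrableD mP iZ2 iZ1.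
have iC := finite_measure_integrable_cst rho (c ^+ 2) mP.
have ig : (\int[rho]_(b in P) (g b)%:E = 0)%E.
  rewrite (eq_integral _ _ (in1W gE)).
  rewrite (integralD mP iA iC) (integralD mP iZ2 iZ1).
  rewrite (integralZl mP i2) (integralZl mP i1).
  rewrite (_ : (fun x => (EFin \o cst (c ^+ 2)%R) x) = cst (c ^+ 2)%:E) //.
  rewrite integral_cst //; last exact: mP.
  have P1m : (rho : measure _ R) P = 1%E by [].
  rewrite e1' e2' P1m -!EFinM -!EFinD; congr EFin.
  rewrite mulr1 mulrA mulVf ?pnatr_eq0 // mul1r; ring.
have mg : measurable_fun P g.
  apply: measurable_funX; apply: measurable_funB; first exact: tv_meas.
  exact: measurable_cst.
have [N [mN N0 Nh]] := int0_null rho g mg (fun b _ => sqr_ge0 _) ig.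
have [b0 [Pb0 Nb0]] := pick_pt rho N P1 mN N0.
have key b : P b -> ~ N b -> b = b0.
  move=> Pb Nb.
  have h1 := Nh b Pb Nb; have h2 := Nh b0 Pb0 Nb0.
  move: h1 h2; rewrite /g => /eqP; rewrite sqrf_eq0 subr_eq0 => /eqP h1.
  move=> /eqP; rewrite sqrf_eq0 subr_eq0 => /eqP; rewrite -h1 !tv1E.
  move=> /invr_inj /mulfI h.
  have /h /eqP : 12%:R != 0 :> R by rewrite pnatr_eq0.
  by rewrite eqrXn2 // ?ltW ?Ppos // => /eqP.
have S1 : rho [set b0] = 1%E.
  have mU : measurable ([set b0] `|` N) by apply: measurableU => //; exact: measurable_set1.
  have sub : P `<=` [set b0] `|` N.
    move=> b Pb; case: (pselect (N b)) => Nb; [by right | left; exact: key].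
  have h1 := le_measure rho (mem_set mP) (mem_set mU) sub.
  have h2 := measureU2 rho (measurable_set1 b0) mN.
  apply/eqP; rewrite eq_le probability_le1 /=; last exact: measurable_set1.
  have P1m : (rho : measure _ R) P = 1%E by [].
  have N0m : (rho : measure _ R) N = 0%E by [].
  have h3 : (rho [set b0] + rho N <= rho [set b0])%E by rewrite N0 adde0.
  rewrite -P1m; exact: (le_trans h1 (le_trans h2 h3)).
exists b0; split; first exact: Ppos.
move=> A mA; rewrite diracE.
have m1 : measurable [set b0] by exact: measurable_set1.
case: (boolP (b0 \in A)) => hA.
  apply/eqP; rewrite eq_le probability_le1 //=.
  have sub : [set b0] `<=` A by move=> x ->; exact: set_mem.
  have h := le_measure rho (mem_set m1) (mem_set mA) sub.
  have h' : (1 <= rho [set b0])%E by rewrite S1.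
  exact: le_trans h' h.
have sub : A `<=` ~` [set b0].
  by move=> x Ax /= xb; move/negP: hA; apply; rewrite -xb; exact: mem_set.
have h := le_measure rho (mem_set mA) (mem_set (measurableC m1)) sub.
have h' : (rho (~` [set b0]) <= 0)%E by rewrite probability_setC // S1 subee.
apply/eqP; rewrite eq_le measure_ge0 andbT; exact: le_trans h h'.
Qed.


Lemma tv1_ge0 (b : R) : P b -> 0 <= thermal_val 1 b.
Proof. by move=> _; rewrite tv1E invr_ge0 mulr_ge0 // sqr_ge0. Qed.

Lemma part1 (wick : nat -> R) (hqf : quasi_free_wick wick) (rho : probability R R) :
  thermal_witness wick 1 rho -> forall n, T_thermal wick n.
Proof.
case=> P1 H.
have [i1 e1] := H 1%N isT.
set c := wick 2%N.
have c0 : 0 <= c.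
  have := @integral_ge0 _ _ _ rho P (fun b => (thermal_val 1 b)%:E) (fun b Pb => ltac:(by rewrite lee_fin; exact: tv1_ge0)).
  by rewrite e1 lee_fin.
have cpos : 0 < c.
  rewrite lt_neqAle c0 andbT; apply/eqP => c00.
  have i0 : (\int[rho]_(b in P) (thermal_val 1 b)%:E = 0)%E by rewrite e1 (_ : wick (2*1)%N = c) // -c00.
  have [N [mN N0 Nh]] := int0_null rho (thermal_val 1) (tv_meas 1) tv1_ge0 i0.
  have [b [Pb Nb]] := pick_pt rho N P1 mN N0.
  have := Nh b Pb Nb; rewrite tv1E; apply/eqP.
  by rewrite invr_eq0 mulf_neq0 // ?pnatr_eq0 // sqrf_eq0 gt_eqF // Ppos.
set beta := Num.sqrt ((12%:R * c)^-1).
have bpos : 0 < beta by rewrite sqrtr_gt0 invr_gt0 mulr_gt0 // ltr0n.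
have Pbeta : P beta by rewrite /pos_reals /= in_itv /= bpos.
have bsq : 12%:R * beta ^+ 2 = c^-1.
  rewrite sqr_sqrtr ?invr_ge0 ?mulr_ge0 ?ler0n // invfM mulrA divff ?mul1r //.
move=> n; exists (\d_beta); split.
  by have := diracE R beta P; rewrite mem_set // => <-.
move=> k _.
have mk : measurable_fun P (fun b => (thermal_val k b)%:E).
  by apply/measurable_EFinP; exact: tv_meas.
split.
  apply/integrableP; split => //.
  rewrite integral_dirac //; last exact: measurableT_comp.
  by rewrite diracE mem_set // mul1e ltry.
  exact: mP.
rewrite integral_dirac //; last exact: mP.
rewrite diracE mem_set // mul1e (hqf k); congr EFin.
by rewrite /thermal_val exprM -exprMn bsq exprVn invrK.
Qed.

End H.

Local Open Scope ring_scope.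

Theorem proposition1 (R : realType) (wick : nat -> R)
    (hqf : quasi_free_wick wick) :
  ((forall n : nat, (1 <= n)%N -> T_thermal wick n) <-> T_thermal wick 1) /\
  (T_thermal wick 1 ->
     forall rho : probability R R, thermal_witness wick 2 rho -> is_dirac rho).
Proof.
split.
  split; first by move=> h; exact: h.
  by move=> [rho hr] n _; exact: (@part1 R wick hqf rho hr n).
by move=> _ rho hr; exact: (@part2 R wick hqf rho hr).
Qed.
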